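(* Let $\bm A=(A_1,\dots,A_d)$ be Hermitian matrices in $M_n(\mathbb{C})$, $B\in M_n(\mathbb{C})$, and $(\bm\lambda,\nu)\in\mathbb{R}^d\times\mathbb{C}$. Then $$\left|\bar\mu^{C}_{(\bm\lambda,\nu)}(\bm A,B)-\dot\mu^{C}_{(\bm\lambda,\nu)}(\bm A,B)\right|\le\sqrt N\,\big\|(B-\nu I)-(B-\nu I)^\dagger\big\|+\Delta\big(L_{(\bm\lambda,\nu)}(\bm A,B)\big),$$ where $N=2mn$ is the size of $L_{(\bm\lambda,\nu)}(\bm A,B)$.
   Context: Let $n,d,m$ be positive integers. Fix Hermitian matrices $\Gamma_1,\dots,\Gamma_d\in M_{2m}(\mathbb{C})$ with $\Gamma_i^2=I_{2m}$ and $\Gamma_i\Gamma_j=-\Gamma_j\Gamma_i$ for $i\neq j$ (a Clifford representation; the paper uses a specific one built from Pauli matrices). Write $P=\begin{bmatrix} I_m&0\\0&0_m\end{bmatrix}$ and $Q=\begin{bmatrix}0_m&0\\0&I_m\end{bmatrix}$ in $M_{2m}(\mathbb{C})$. For a $d$-tuple $\bm A=(A_1,\dots,A_d)$ of Hermitian matrices in $M_n(\mathbb{C})$, a matrix $B\in M_n(\mathbb{C})$ (not necessarily Hermitian or normal), and a probe site $(\bm\lambda,\nu)\in\mathbb{R}^d\times\mathbb{C}$, the non-Hermitian spectral localizer is $$L_{(\bm\lambda,\nu)}(\bm A,B)=\sum_{i=1}^d (A_i-\lambda_i I)\otimes\Gamma_i+(B-\nu I)\otimes P-(B-\nu I)^\dagger\otimes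 Q\in M_{2mn}(\mathbb{C}).$$ The Clifford radial gap is $\dot\mu^{C}_{(\bm\lambda,\nu)}(\bm A,B)=\sigma_{\min}\big(L_{(\bm\lambda,\nu)}(\bm A,B)\big)$ and the Clifford linear gap is $\bar\mu^{C}_{(\bm\lambda,\nu)}(\bm A,B)=\min\{|\mathrm{Re}(z)|:z\in\mathrm{Spec}(L_{(\bm\lambda,\nu)}(\bm A,B))\}$. For a square matrix $M$, its deviation from normality is $\Delta(M)=\inf\{\|U\|: M=W(D+U)W^\dagger\text{ a Schur decomposition, } W\text{ unitary}, D\text{ diagonal}, U\text{ strictly upper triangular}\}$. Matrix norms are operator norms. *)

(* Defs.v *)
From mathcomp Require Import all_boot all_order all_algebra.
From mathcomp Require Import sesquilinear spectral.
From mathcomp Require Import classical_sets reals.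
From mathcomp.real_closed Require Import complex mxtens.
Set Implicit Arguments. Unset Strict Implicit. Unset Printing Implicit Defensive.
Import Order.TTheory GRing.Theory Num.Theory.
Local Open Scope ring_scope.
Local Open Scope sesquilinear_scope.
Local Open Scope classical_set_scope.
Local Open Scope complex_scope.
Local Open Scope ring_scope.
Local Open Scope sesquilinear_scope.

Section Defs.
Variable R : realType.
Local Notation C := R[i].

Definition adj (p q : nat) (M : 'M[C]_(p, q)) : 'M[C]_(q, p) := M ^t*.

Definition is_hermitian (p : nat) (M : 'M[C]_p) : Prop := adj M = M.
Definition unitary (p : nat) (W : 'M[C]_p) : Prop := W \is unitarymx.
Definition diagonal (p : nat) (D : 'M[C]_p) : Prop :=
  forall i j : 'I_p, i != j -> D i j = 0.
Definition strictly_upper (p : nat) (U : 'M[C]_p) : Prop :=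
  forall i j : 'I_p, (j <= i)%N -> U i j = 0.

Definition vnorm (p : nat) (x : 'cV[C]_p) : R :=
  Num.sqrt (\sum_(i < p) complex.Re (`|x i 0| ^+ 2)).

Definition opnorm (p q : nat) (M : 'M[C]_(p, q)) : R :=
  sup [set vnorm (M *m x) | x in [set x : 'cV[C]_q | vnorm x <= 1]].

Definition sigma_min (p : nat) (M : 'M[C]_p) : R :=
  inf [set Num.sqrt (complex.Re z) | z in [set z : C | eigenvalue (adj M *m M) z]].

Definition min_abs_re_spec (p : nat) (M : 'M[C]_p) : R :=
  inf [set `|complex.Re z| | z in [set z : C | eigenvalue M z]].

Definition dev_normality (p : nat) (M : 'M[C]_p) : R :=
  inf [set opnorm U | U in [set U : 'M[C]_p | exists (W D : 'M[C]_p),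
        [/\ unitary W, diagonal D, strictly_upper U & M = W *m (D + U) *m adj W]]].

Definition clifford_rep (d m : nat) (G : 'I_d -> 'M[C]_(m + m)) : Prop :=
  (forall i, is_hermitian (G i)) /\ (forall i, G i *m G i = 1%:M) /\
  (forall i j, i != j -> G i *m G j = - (G j *m G i)).

Definition projP (m : nat) : 'M[C]_(m + m) := block_mx 1%:M 0 0 0.
Definition projQ (m : nat) : 'M[C]_(m + m) := block_mx 0 0 0 1%:M.

Definition localizer (d m n : nat) (G : 'I_d -> 'M[C]_(m + m))
  (A : 'I_d -> 'M[C]_n) (B : 'M[C]_n) (lam : 'I_d -> R) (nu : C)
  : 'M[C]_(n * (m + m)) :=
  \sum_(i < d) ((A i - (lam i)%:C%:M) *t G i)
  + ((B - nu%:M) *t projP m) - (adj (B - nu%:M) *t projQ m).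

Definition clifford_radial_gap d m n G A B lam nu : R :=
  sigma_min (@localizer d m n G A B lam nu).
Definition clifford_linear_gap d m n G A B lam nu : R :=
  min_abs_re_spec (@localizer d m n G A B lam nu).

End Defs.

(* Main.v *)
Require Import Defs.
From mathcomp Require Import all_boot all_order all_algebra.
From mathcomp Require Import sesquilinear spectral.
From mathcomp Require Import classical_sets reals.
From mathcomp.real_closed Require Import complex mxtens.
From mathcomp Require Import ring lra.
Import Order.TTheory GRing.Theory Num.Theory.
Import Num.Def.
Local Open Scope ring_scope.

Section Aux.
Set Implicit Arguments. Unset Strict Implicit. Unset Printing Implicit Defensive.
Variable R : realType.
Local Notation C := R[i].
Local Open Scope complex_scope.
Local Open Scope ring_scope.
Local Open Scope sesquilinear_scope.
Local Open Scope classical_set_scope.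
Local Open Scope ring_scope.
Local Notation nc := (@Normc.normc R).

Lemma normcE (c : C) : `|c| = (nc c)%:C. Proof. by []. Qed.
Lemma nc_ge0 (c : C) : 0 <= nc c.
Proof. by case: c => a b; rewrite /= sqrtr_ge0. Qed.
Lemma ReC (r : R) : complex.Re (r%:C) = r. Proof. by []. Qed.
Lemma ReD (c d : C) : complex.Re (c + d) = complex.Re c + complex.Re d. Proof. by case: c; case: d. Qed.
Lemma ReMr (c : C) (r : R) : complex.Re (c * r%:C) = complex.Re c * r.
Proof. by case: c => a b /=; rewrite mulr0 subr0. Qed.
Lemma Re_conj (c : C) : complex.Re (conjC c) = complex.Re c. Proof. by case: c. Qed.
Lemma Re_le_nc (c : C) : `|complex.Re c| <= nc c.
Proof.
case: c => a b /=; rewrite -sqrtr_sqr ler_sqrt ?addr_ge0 ?sqr_ge0 //.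
by rewrite lerDl sqr_ge0.
Qed.
Lemma nc_le_ReIm (c : C) : nc c <= `|complex.Re c| + `|complex.Im c|.
Proof.
case: c => a b /=.
have h : 0 <= `|a| + `|b| by rewrite addr_ge0.
rewrite -[X in _ <= X](ger0_norm h) -sqrtr_sqr ler_sqrt ?sqr_ge0 //.
rewrite sqrrD (real_normK (num_real a)) (real_normK (num_real b)).
have h2 : 0 <= `|a| * `|b| *+ 2 by rewrite mulrn_wge0 // mulr_ge0.
lra.
Qed.
Lemma nc_real (r : R) : nc (r%:C) = `|r|.
Proof. by rewrite /= expr0n /= addr0 sqrtr_sqr. Qed.
Lemma ncM (c d : C) : nc (c * d) = nc c * nc d.
Proof. exact: Normc.normcM. Qed.
Lemma sqr_normC (c : C) : `|c| ^+ 2 = ((nc c) ^+ 2)%:C.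
Proof. by rewrite normcE rmorphXn. Qed.
Lemma conj_mul_self (c : C) : conjC c * c = ((nc c) ^+ 2)%:C.
Proof. by rewrite -sqr_normC normCK mulrC. Qed.
Lemma sqrtC_real (r : R) : 0 <= r -> sqrtC (r%:C) = (Num.sqrt r)%:C.
Proof.
move=> r0; rewrite -{1}(sqr_sqrtr r0) rmorphXn sqrCK //.
by rewrite ler0c sqrtr_ge0.
Qed.
Lemma Im_conj_sub (c : C) : nc (c - conjC c) = 2 * `|complex.Im c|.
Proof.
case: c => a b /=.
rewrite subrr expr0n /= add0r opprK sqrtr_sqr -mulr2n normrMn.
by rewrite mulr_natl.
Qed.


Lemma sq_le (a b : R) : 0 <= a -> 0 <= b -> a ^+ 2 <= b ^+ 2 -> a <= b.
Proof. by move=> a0 b0; rewrite ler_pXn2r // nnegrE. Qed.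
Lemma sq_inj (a b : R) : 0 <= a -> 0 <= b -> a ^+ 2 = b ^+ 2 -> a = b.
Proof. by move=> a0 b0 h; apply/le_anti/andP; split; apply: sq_le => //; rewrite h. Qed.

Lemma lec_nc (c d : C) : (nc c <= nc d) = (`|c| <= `|d|).
Proof. by rewrite !normcE lecR. Qed.
Lemma nc_sum (I : finType) (F : I -> C) : nc (\sum_i F i) <= \sum_i nc (F i).
Proof.
rewrite -lecR -normcE rmorph_sum /=.
by apply: le_trans (ler_norm_sum _ _ _) _; rewrite le_eqVlt eqxx.
Qed.
Lemma ncD (c d : C) : nc (c + d) <= nc c + nc d.
Proof. by rewrite -lecR rmorphD -!normcE ler_normD. Qed.

Definition ip p (x y : 'cV[C]_p) : C := (x ^t* *m y) 0 0.

Lemma ipE p (x y : 'cV[C]_p) : ip x y = \sum_i conjC (x i 0) * y i 0.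
Proof. by rewrite /ip !mxE; apply: eq_bigr => i _; rewrite !mxE. Qed.

Lemma ip_dot p (x y : 'cV[C]_p) : ip x y = dotmx (y^T) (x^T).
Proof. by rewrite dotmxE ipE !mxE; apply: eq_bigr => i _; rewrite !mxE mulrC. Qed.

Lemma ReRsq (c : C) : complex.Re (`|c| ^+ 2) = nc c ^+ 2.
Proof. by rewrite sqr_normC. Qed.

Lemma vnorm_sqE p (x : 'cV[C]_p) : vnorm x ^+ 2 = \sum_i nc (x i 0) ^+ 2.
Proof.
rewrite /vnorm sqr_sqrtr; first by apply: eq_bigr => i _; rewrite ReRsq.
by apply: sumr_ge0 => i _; rewrite ReRsq sqr_ge0.
Qed.

Lemma vnormE p (x : 'cV[C]_p) : vnorm x = Num.sqrt (\sum_i nc (x i 0) ^+ 2).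
Proof. by rewrite /vnorm; congr Num.sqrt; apply: eq_bigr => i _; rewrite ReRsq. Qed.

Lemma vnorm_ge0 p (x : 'cV[C]_p) : 0 <= vnorm x.
Proof. exact: sqrtr_ge0. Qed.

Lemma ip_self p (x : 'cV[C]_p) : ip x x = (vnorm x ^+ 2)%:C.
Proof.
rewrite ipE vnorm_sqE rmorph_sum; apply: eq_bigr => i _.
by rewrite conj_mul_self.
Qed.

Lemma vnorm_eq0 p (x : 'cV[C]_p) : vnorm x = 0 -> x = 0.
Proof.
move=> h; have : ip x x = 0 by rewrite ip_self h expr0n.
rewrite ip_dot => /eqP; rewrite dnorm_eq0 => /eqP h2.
by rewrite -[x]trmxK h2 trmx0.
Qed.

Lemma vnorm_gt0 p (x : 'cV[C]_p) : x != 0 -> 0 < vnorm x.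
Proof.
move=> x0; rewrite lt_def vnorm_ge0 andbT; apply/eqP => /vnorm_eq0 h.
by rewrite h eqxx in x0.
Qed.

Lemma CS p (x y : 'cV[C]_p) : nc (ip x y) <= vnorm x * vnorm y.
Proof.
have h : `|dotmx (y^T) (x^T)| <= sqrtC (dotmx (y^T) (y^T)) * sqrtC (dotmx (x^T) (x^T)).
  exact: (CauchySchwarz_sqrt (@dotmx C p) (y^T) (x^T)).1.
rewrite -!ip_dot !ip_self !sqrtC_real ?sqr_ge0 // !sqrtr_sqr in h.
rewrite (ger0_norm (vnorm_ge0 y)) (ger0_norm (vnorm_ge0 x)) in h.
by rewrite -lecR -normcE rmorphM mulrC.
Qed.

Lemma vnormZ p (a : C) (x : 'cV[C]_p) : vnorm (a *: x) = nc a * vnorm x.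
Proof.
rewrite !vnormE.
have -> : \sum_i nc ((a *: x) i 0) ^+ 2 = nc a ^+ 2 * \sum_i nc (x i 0) ^+ 2.
  by rewrite mulr_sumr; apply: eq_bigr => i _; rewrite mxE ncM exprMn.
by rewrite sqrtrM ?sqr_ge0 // sqrtr_sqr ger0_norm ?nc_ge0.
Qed.

Lemma ipC p (x y : 'cV[C]_p) : ip y x = conjC (ip x y).
Proof.
rewrite !ipE rmorph_sum; apply: eq_bigr => i _.
by rewrite /= rmorphM /= conjCK mulrC.
Qed.

Lemma ipDD p (x y : 'cV[C]_p) :
  ip (x + y) (x + y) = ip x x + ip x y + ip y x + ip y y.
Proof.
rewrite !ipE -!big_split; apply: eq_bigr => i _ /=.
rewrite !mxE rmorphD /=; ring.
Qed.

Lemma vnormD p (x y : 'cV[C]_p) : vnorm (x + y) <= vnorm x + vnorm y.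
Proof.
apply: sq_le; rewrite ?addr_ge0 ?vnorm_ge0 //.
have h : (vnorm (x + y) ^+ 2) = vnorm x ^+ 2 + vnorm y ^+ 2 + 2 * complex.Re (ip x y).
  rewrite -[LHS]ReC -ip_self ipDD !ReD [ip y x]ipC Re_conj !ip_self !ReC.
  by rewrite mulr2n mulrDl mul1r; ring.
rewrite h.
have h1 := CS x y; have h2 := Re_le_nc (ip x y).
have h3 : complex.Re (ip x y) <= `|complex.Re (ip x y)| by apply: ler_norm.
rewrite sqrrD; nra.
Qed.


Lemma ipM p q (x : 'cV[C]_p) (M : 'M[C]_(p, q)) (y : 'cV[C]_q) :
  ip x (M *m y) = ip (M ^t* *m x) y.
Proof. by rewrite /ip trmx_mul map_mxM trmxCK mulmxA. Qed.

Lemma vnorm_iso p q (U : 'M[C]_(p, q)) (x : 'cV[C]_q) :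
  U ^t* *m U = 1%:M -> vnorm (U *m x) = vnorm x.
Proof.
move=> hU; apply: sq_inj; rewrite ?vnorm_ge0 //; apply: complexI.
rewrite -!ip_self -[U in ip (U *m x)]trmxCK -ipM.
by rewrite mulmxA hU mul1mx.
Qed.

Lemma vnorm_entry p (x : 'cV[C]_p) i : nc (x i 0) <= vnorm x.
Proof.
apply: sq_le; rewrite ?nc_ge0 ?vnorm_ge0 // vnorm_sqE (bigD1 i) //=.
by rewrite lerDl sumr_ge0 // => j _; rewrite sqr_ge0.
Qed.

Lemma vnorm_le_entries p (x : 'cV[C]_p) (c : R) : 0 <= c ->
  (forall i, nc (x i 0) <= c) -> vnorm x <= Num.sqrt p%:R * c.
Proof.
move=> c0 h; apply: sq_le; rewrite ?vnorm_ge0 ?mulr_ge0 ?sqrtr_ge0 //.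
rewrite vnorm_sqE exprMn sqr_sqrtr ?ler0n //.
have -> : p%:R * c ^+ 2 = \sum_(i < p) c ^+ 2 by rewrite sumr_const card_ord mulr_natl.
by apply: ler_sum => i _; rewrite ler_pXn2r ?nnegrE ?nc_ge0.
Qed.

Definition onset p q (M : 'M[C]_(p, q)) :=
  [set vnorm (M *m x) | x in [set x : 'cV[C]_q | vnorm x <= 1]].

Lemma opnorm_ub p q (M : 'M[C]_(p, q)) : has_ubound (onset M).
Proof.
exists (Num.sqrt p%:R * \sum_i \sum_j nc (M i j)) => _ [x /= hx <-].
apply: vnorm_le_entries; first by apply: sumr_ge0 => i _; apply: sumr_ge0 => j _; exact: nc_ge0.
move=> i; rewrite mxE; apply: le_trans (nc_sum _) _.
apply: le_trans (_ : \sum_j nc (M i j) <= _).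
  apply: ler_sum => j _; rewrite ncM -[X in _ <= X]mulr1 ler_wpM2l ?nc_ge0 //.
  exact: le_trans (vnorm_entry x j) hx.
rewrite (bigD1 i) //= lerDl; apply: sumr_ge0 => k _; apply: sumr_ge0 => j _; exact: nc_ge0.
Qed.

Lemma opnorm_ge0 p q (M : 'M[C]_(p, q)) : 0 <= opnorm M.
Proof.
have := ub_le_sup (opnorm_ub M); apply.
exists 0 => /=; first by rewrite /vnorm big1 ?sqrtr0 // => i _; rewrite mxE normr0 expr0n.
by rewrite mulmx0 /vnorm big1 ?sqrtr0 // => i _; rewrite mxE normr0 expr0n.
Qed.

Lemma opnormP p q (M : 'M[C]_(p, q)) (x : 'cV[C]_q) :
  vnorm (M *m x) <= opnorm M * vnorm x.
Proof.
have [->|x0] := eqVneq x 0.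
  by rewrite mulmx0 /vnorm big1 ?sqrtr0 ?mulr_ge0 ?sqrtr_ge0 ?opnorm_ge0 // => i _; rewrite mxE normr0 expr0n.
have vx := vnorm_gt0 x0.
set y := ((vnorm x)^-1)%:C *: x.
have hy : vnorm y = 1.
  by rewrite /y vnormZ nc_real ger0_norm ?invr_ge0 ?vnorm_ge0 // mulVf // gt_eqF.
have h : vnorm (M *m y) <= opnorm M.
  by apply: (ub_le_sup (opnorm_ub M)); exists y => //=; rewrite hy.
rewrite /y -scalemxAr vnormZ nc_real ger0_norm ?invr_ge0 ?vnorm_ge0 // in h.
by rewrite -ler_pdivrMr // mulrC.
Qed.


Lemma eigenvalueE p (g : 'M[C]_p) a : eigenvalue g a = (\det (g - a%:M) == 0).
Proof. by rewrite /eigenvalue /eigenspace kermx_eq0 row_free_unit unitmxE unitfE negbK. Qed.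

Lemma eigen_tr p (g : 'M[C]_p) a : eigenvalue g^T a = eigenvalue g a.
Proof.
by rewrite !eigenvalueE -det_tr linearB /= trmxK tr_scalar_mx.
Qed.

Lemma eigen_colvec p (g : 'M[C]_p) a : eigenvalue g a ->
  exists2 x : 'cV[C]_p, g *m x = a *: x & x != 0.
Proof.
rewrite -eigen_tr => /eigenvalueP [v hv v0].
exists v^T; last by apply: contra v0 => /eqP h; rewrite -[v]trmxK h trmx0.
by rewrite -[g]trmxK -trmx_mul hv linearZ.
Qed.

Lemma ipZr p (x y : 'cV[C]_p) a : ip x (a *: y) = a * ip x y.
Proof.
by rewrite !ipE mulr_sumr; apply: eq_bigr => i _; rewrite mxE mulrCA.
Qed.

Lemma ipZl p (x y : 'cV[C]_p) a : ip (a *: x) y = conjC a * ip x y.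
Proof.
by rewrite !ipE mulr_sumr; apply: eq_bigr => i _; rewrite mxE rmorphM mulrA.
Qed.

Lemma adjLL p (L : 'M[C]_p) : (L ^t* *m L) ^t* = L ^t* *m L.
Proof. by rewrite trmx_mul map_mxM trmxCK. Qed.

Lemma eig_LL p (L : 'M[C]_p) w : eigenvalue (L ^t* *m L) w ->
  exists2 x : 'cV[C]_p, vnorm (L *m x) ^+ 2 = complex.Re w * vnorm x ^+ 2 & x != 0.
Proof.
move=> /eigenvalueP [v hv v0].
exists (v ^t*); last by apply: contra v0 => /eqP h; rewrite -[v]trmxCK h linear0 /= map_mx0.
have hM : (L ^t* *m L) *m v ^t* = conjC w *: v ^t*.
  by rewrite -{1}adjLL -map_mxM -trmx_mul hv linearZ /= map_mxZ.
have := congr1 (ip (v ^t*)) hM.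
rewrite ipZr ip_self -mulmxA ipM trmxCK ip_self => /(congr1 (@complex.Re R)).
by rewrite ReC ReMr Re_conj.
Qed.

Lemma ReSum (I : finType) (F : I -> C) : complex.Re (\sum_i F i) = \sum_i complex.Re (F i).
Proof. by apply: (big_ind2 (fun c r => complex.Re c = r)) => // c1 r1 c2 r2 <- <-; rewrite ReD. Qed.


Lemma unitary_tC p (P : 'M[C]_p) : P \is unitarymx -> P ^t* *m P = 1%:M.
Proof. by move=> /unitarymxP h; apply: mulmx1C. Qed.

Lemma rayleigh p (L : 'M[C]_p) : (0 < p)%N ->
  exists2 w, eigenvalue (L ^t* *m L) w &
    forall x : 'cV[C]_p, complex.Re w * vnorm x ^+ 2 <= vnorm (L *m x) ^+ 2.
Proof.
move=> p0; set M := L ^t* *m L.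
have Mn : M \is normalmx by apply/normalmxP; rewrite /M adjLL.
have /orthomx_spectralP hM := Mn.
set P := spectralmx M in hM; set s := spectral_diag M in hM.
have Pu : P \is unitarymx by apply: spectral_unitarymx.
rewrite invmx_unitary // in hM.
have hPP : P *m P ^t* = 1%:M by apply/unitarymxP.
have hPtP := unitary_tC Pu.
pose k0 := Ordinal p0.
case: (@arg_minP _ _ _ k0 xpredT (fun k => complex.Re (s 0 k))) => // k _ hk.
exists (s 0 k).
  apply/eigenvalueP; exists (row k P).
    rewrite hM !mulmxA -row_mul hPP -!row_mul mul1mx mul_diag_mx; apply/rowP => j; by rewrite !mxE.
  apply/eqP => h; have := congr1 (fun r => (r *m P ^t*) 0 k) h.
  rewrite -row_mul hPP mul0mx !mxE eqxx /= => /eqP; by rewrite oner_eq0.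
move=> x; set y := P *m x.
have vy : vnorm y = vnorm x by apply: vnorm_iso.
have e1 : ip x (M *m x) = (vnorm (L *m x) ^+ 2)%:C.
  by rewrite /M -mulmxA ipM trmxCK ip_self.
have e2 : ip x (M *m x) = \sum_i s 0 i * ((nc (y i 0)) ^+ 2)%:C.
  rewrite {1}hM -!mulmxA ipM trmxCK ipE; apply: eq_bigr => i _.
  by rewrite mul_diag_mx [X in _ * X]mxE mulrCA conj_mul_self.
have := congr1 (@complex.Re R) e2; rewrite e1 ReC ReSum => ->.
rewrite -vy vnorm_sqE mulr_sumr; apply: ler_sum => i _.
by rewrite ReMr ler_wpM2r ?sqr_ge0 ?hk.
Qed.


Lemma diag_bound p (D : 'M[C]_p) : (0 < p)%N -> Defs.diagonal D ->
  exists k, forall y : 'cV[C]_p, nc (D k k) * vnorm y <= vnorm (D *m y).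
Proof.
move=> p0 hD; pose k0 := Ordinal p0.
case: (@arg_minP _ _ _ k0 xpredT (fun k => nc (D k k))) => // k _ hk.
exists k => y; apply: sq_le; rewrite ?mulr_ge0 ?nc_ge0 ?vnorm_ge0 //.
rewrite exprMn !vnorm_sqE mulr_sumr; apply: ler_sum => i _.
have -> : (D *m y) i 0 = D i i * y i 0.
  rewrite mxE (bigD1 i) //= big1 ?addr0 // => j ji.
  by rewrite hD ?mul0r // eq_sym.
by rewrite ncM exprMn ler_wpM2r ?sqr_ge0 // ler_pXn2r ?nnegrE ?nc_ge0 ?hk.
Qed.

Lemma trig_eigen p (L W T : 'M[C]_p) (k : 'I_p) : W \is unitarymx ->
  (forall i j : 'I_p, (j < i)%N -> T i j = 0) ->
  L = W *m T *m W ^t* -> eigenvalue L (T k k).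
Proof.
move=> Wu hT ->; rewrite eigenvalueE.
have -> : W *m T *m W ^t* - (T k k)%:M = W *m (T - (T k k)%:M) *m W ^t*.
  rewrite mulmxBr mulmxBl mul_mx_scalar -scalemxAl (unitarymxP Wu).
  by rewrite scalemx1.
have ht : is_trig_mx ((T - (T k k)%:M)^T).
  apply/is_trig_mxP => i j ij; rewrite !mxE (hT j i ij).
  have -> : (j == i) = false by apply/negbTE; rewrite -val_eqE /= gtn_eqF.
  by rewrite mulr0n subr0.
rewrite !det_mulmx -(det_tr (T - (T k k)%:M)) (det_trig ht) (bigD1 k) //= !mxE eqxx mulr1n subrr.
by rewrite mul0r mulr0 mul0r.
Qed.

Lemma schur_exists p (L : 'M[C]_p) : (0 < p)%N -> exists U,
  exists (W D : 'M[C]_p), [/\ Defs.unitary W, Defs.diagonal D, Defs.strictly_upper U &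
       L = W *m (D + U) *m adj W].
Proof.
move=> p0; have [P Pu hT] := Schur (L ^t*) p0.
rewrite /similar_to /conjmx pinvmx_unitary // in hT.
set T := P *m L ^t* *m P ^t* in hT.
have eT : T = P *m L ^t* *m P ^t* by [].
clearbody T; move/is_trig_mxP: hT => hT.
have hPtP := unitary_tC Pu.
set T' := T ^t*.
exists (\matrix_(i, j) if (i < j)%N then T' i j else 0).
exists (P ^t*), (\matrix_(i, j) if i == j then T' i j else 0); split.
- by rewrite /unitary trmxC_unitary.
- by move=> i j ij; rewrite mxE (negPf ij).
- by move=> i j ji; rewrite mxE ltnNge ji.
have -> : (\matrix_(i, j) (if i == j then T' i j else 0)) +
          (\matrix_(i, j) (if (i < j)%N then T' i j else 0)) = T'.
  apply/matrixP => i j; rewrite !mxE.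
  case: (ltngtP i j) => ij.
  - have -> : (i == j) = false by rewrite -val_eqE /= ltn_eqF.
    by rewrite add0r.
  - have -> : (i == j) = false by rewrite -val_eqE /= gtn_eqF.
    by rewrite add0r hT // conjC0.
  - have -> : i = j by apply: val_inj.
    by rewrite eqxx addr0.
rewrite /adj trmxCK /T' eT !trmx_mul !map_mxM !trmxCK !mulmxA hPtP mul1mx.
by rewrite -mulmxA hPtP mulmx1.
Qed.


Lemma ipBr p (x y w : 'cV[C]_p) : ip x (y - w) = ip x y - ip x w.
Proof.
by rewrite !ipE -sumrB; apply: eq_bigr => i _; rewrite !mxE mulrBr.
Qed.

Lemma im_bound p (L : 'M[C]_p) z (x : 'cV[C]_p) c : x != 0 -> L *m x = z *: x ->
  (forall y, vnorm ((L - L ^t*) *m y) <= c * vnorm y) -> `|complex.Im z| <= c.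
Proof.
move=> x0 hx hK.
have vx := vnorm_gt0 x0.
have e : ip x ((L - L ^t*) *m x) = (z - conjC z) * (vnorm x ^+ 2)%:C.
  rewrite mulmxBl ipBr hx ipZr (ipM x (L ^t*)) trmxCK hx ipZl ip_self.
  by rewrite mulrBl.
have h1 := CS x ((L - L ^t*) *m x).
rewrite e ncM Im_conj_sub nc_real (ger0_norm (sqr_ge0 (vnorm x))) in h1.
have h2 := hK x.
have h3 : 2 * `|complex.Im z| * vnorm x ^+ 2 <= c * vnorm x ^+ 2.
  apply: le_trans h1 _; apply: le_trans (ler_wpM2l (vnorm_ge0 x) h2) _.
  by rewrite expr2 mulrCA.
rewrite ler_pM2r ?exprn_gt0 // in h3.
have := normr_ge0 (complex.Im z); lra.
Qed.


Lemma sum_tens n q (F : 'I_(n * q) -> C) :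
  \sum_k F k = \sum_(j < n) \sum_(b < q) F (mxtens_index (j, b)).
Proof.
rewrite (reindex (@mxtens_index n q)) /=; last first.
  by apply: onW_bij; exact: (Bijective (@mxtens_indexK n q) (@mxtens_unindexK n q)).
by rewrite pair_big /=; apply: eq_bigr => -[j b].
Qed.

Lemma sum_tensR n q (F : 'I_(n * q) -> R) :
  \sum_k F k = \sum_(j < n) \sum_(b < q) F (mxtens_index (j, b)).
Proof.
rewrite (reindex (@mxtens_index n q)) /=; last first.
  by apply: onW_bij; exact: (Bijective (@mxtens_indexK n q) (@mxtens_unindexK n q)).
by rewrite pair_big /=; apply: eq_bigr => -[j b].
Qed.

Lemma tens_bound n q (X : 'M[C]_n) (x : 'cV[C]_(n * q)) :
  vnorm ((X *t (1%:M : 'M_q)) *m x) <= Num.sqrt (n * q)%:R * (opnorm X * vnorm x).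
Proof.
apply: vnorm_le_entries; first by rewrite mulr_ge0 ?opnorm_ge0 ?vnorm_ge0.
move=> k; case: (mxtens_indexP k) => i a.
pose xa : 'cV[C]_n := \col_j x (mxtens_index (j, a)) 0.
have -> : ((X *t (1%:M : 'M_q)) *m x) (mxtens_index (i, a)) 0 = (X *m xa) i 0.
  rewrite !mxE sum_tens; apply: eq_bigr => j _.
  rewrite (bigD1 a) //= big1 ?addr0.
    by rewrite tensmxE !mxE eqxx mulr1.
  by move=> b ba; rewrite tensmxE !mxE eq_sym (negPf ba) mulr0 mul0r.
apply: le_trans (vnorm_entry _ i) _.
apply: le_trans (opnormP _ _) _.
rewrite ler_wpM2l ?opnorm_ge0 //.
apply: sq_le; rewrite ?vnorm_ge0 // !vnorm_sqE sum_tensR.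
apply: ler_sum => j _; rewrite (bigD1 a) //= mxE lerDl.
by apply: sumr_ge0 => b _; rewrite sqr_ge0.
Qed.


Lemma adjE p q (M : 'M[C]_(p, q)) i j : (M ^t*) i j = conjC (M j i).
Proof. by rewrite !mxE. Qed.

Lemma adj_tens p q r t (M : 'M[C]_(p, q)) (N : 'M[C]_(r, t)) :
  (M *t N) ^t* = M ^t* *t N ^t*.
Proof. by apply/matrixP => i j; rewrite !mxE rmorphM. Qed.

Lemma adj_sumT (I : finType) p (F : I -> 'M[C]_p) :
  (forall i, (F i) ^t* = F i) -> (\sum_i F i) ^t* = \sum_i F i.
Proof.
move=> h; apply/matrixP => i j; rewrite adjE !summxE rmorph_sum.
by apply: eq_bigr => k _; rewrite /= -adjE h.
Qed.

Lemma adjDB p (S T1 T2 : 'M[C]_p) : (S + T1 - T2) ^t* = S ^t* + T1 ^t* - T2 ^t*.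
Proof. by apply/matrixP => i j; rewrite !mxE rmorphB rmorphD. Qed.

Lemma adjP m : (projP R m) ^t* = projP R m.
Proof.
by rewrite /projP tr_block_mx map_block_mx !trmx0 tr_scalar_mx !map_mx0 map_scalar_mx rmorph1.
Qed.

Lemma adjQ m : (projQ R m) ^t* = projQ R m.
Proof.
by rewrite /projQ tr_block_mx map_block_mx !trmx0 tr_scalar_mx !map_mx0 map_scalar_mx rmorph1.
Qed.

Lemma PQ1 m : projP R m + projQ R m = 1%:M :> 'M[C]_(m + m).
Proof. by rewrite /projP /projQ add_block_mx !addr0 !add0r -scalar_mx_block. Qed.

Lemma localizer_antiherm d m n (G : 'I_d -> 'M[C]_(m + m)) (HG : clifford_rep G)
  (A : 'I_d -> 'M[C]_n) (HA : forall k, is_hermitian (A k))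
  (B : 'M[C]_n) (lam : 'I_d -> R) (nu : C) :
  let L := localizer G A B lam nu in
  L - L ^t* = ((B - nu%:M) - adj (B - nu%:M)) *t (1%:M : 'M_(m + m)).
Proof.
move=> L; rewrite /L /localizer.
set S := \sum_(i < d) _.
have hS : S ^t* = S.
  apply: adj_sumT => k; rewrite adj_tens.
  case: HG => hG _; have := hG k; rewrite /is_hermitian /adj => ->.
  congr (_ *t _); have := HA k; rewrite /is_hermitian /adj => hA.
  apply/matrixP => i j; rewrite !mxE rmorphB /=; congr (_ - _).
    by rewrite -{1}hA !mxE conjCK.
  rewrite rmorphMn /= eq_sym; congr (_ *+ _); exact: conjc_real.
rewrite adjDB hS !adj_tens adjP adjQ /adj trmxCK -PQ1.
clear hS; move: S (projP R m) (projQ R m) (B - nu%:M) => S P Q B'.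
move: (B' ^t*) => a.
apply/matrixP => i j; rewrite !mxE.
ring.
Qed.


Lemma nc_N1 : nc (-1) = 1.
Proof. by rewrite /= oppr0 expr0n addr0 /= sqrtr_sqr normrN1. Qed.

Lemma mars_ge p (M : 'M[C]_p) z : eigenvalue M z -> min_abs_re_spec M <= `|complex.Re z|.
Proof.
move=> hz; apply: ge_inf; last by exists z.
by exists 0 => _ [y _ <-].
Qed.

Lemma mars_lb p (M : 'M[C]_p) x : (exists z, eigenvalue M z) ->
  (forall z, eigenvalue M z -> x <= `|complex.Re z|) -> x <= min_abs_re_spec M.
Proof.
move=> [z hz] h; apply: lb_le_inf; first by exists `|complex.Re z|, z.
by move=> _ [y hy <-]; apply: h.
Qed.

Lemma smin_ge p (M : 'M[C]_p) w : eigenvalue (adj M *m M) w ->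
  sigma_min M <= Num.sqrt (complex.Re w).
Proof.
move=> hw; apply: ge_inf; last by exists w.
by exists 0 => _ [y _ <-]; exact: sqrtr_ge0.
Qed.

Lemma smin_lb p (M : 'M[C]_p) x : (exists w, eigenvalue (adj M *m M) w) ->
  (forall w, eigenvalue (adj M *m M) w -> x <= Num.sqrt (complex.Re w)) -> x <= sigma_min M.
Proof.
move=> [w hw] h; apply: lb_le_inf; first by exists (Num.sqrt (complex.Re w)), w.
by move=> _ [y hy <-]; apply: h.
Qed.

Lemma dev_lb p (M : 'M[C]_p) x : (0 < p)%N ->
  (forall U, (exists (W D : 'M[C]_p), [/\ Defs.unitary W, Defs.diagonal D,
     Defs.strictly_upper U & M = W *m (D + U) *m adj W]) -> x <= opnorm U) ->
  x <= dev_normality M.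
Proof.
move=> p0 h; apply: lb_le_inf.
  by have [U hU] := schur_exists M p0; exists (opnorm U), U.
by move=> _ [U hU <-]; apply: h.
Qed.

End Aux.

Theorem mainTheorem11 (R : realType) (n d m : nat) (n_gt0 : (0 < n)%N)
  (d_gt0 : (0 < d)%N) (m_gt0 : (0 < m)%N)
  (G : 'I_d -> 'M[R[i]]_(m + m)) (HG : clifford_rep G)
  (A : 'I_d -> 'M[R[i]]_n) (HA : forall k, is_hermitian (A k))
  (B : 'M[R[i]]_n) (lam : 'I_d -> R) (nu : R[i]) :
  `| clifford_linear_gap G A B lam nu - clifford_radial_gap G A B lam nu |
    <= Num.sqrt (n * (m + m))%:R * opnorm ((B - nu%:M) - adj (B - nu%:M))
       + dev_normality (localizer G A B lam nu).
Proof.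
rewrite /clifford_linear_gap /clifford_radial_gap.
set L := localizer G A B lam nu.
set X := (B - nu%:M) - adj (B - nu%:M).
have N0 : (0 < n * (m + m))%N by rewrite muln_gt0 n_gt0 addn_gt0 m_gt0.
set s := Num.sqrt (n * (m + m))%:R * opnorm X.
have s0 : 0 <= s by rewrite mulr_ge0 ?sqrtr_ge0 ?opnorm_ge0.
have hL : L - adj L = X *t (1%:M : 'M_(m + m)) := localizer_antiherm HG HA B lam nu.
have hK : forall y, vnorm ((L - adj L) *m y) <= s * vnorm y.
  by move=> y; rewrite hL -mulrA tens_bound.
have ne1 := eigenvalue_closed L N0.
have ne2 := eigenvalue_closed (adj L *m L) N0.
set a := min_abs_re_spec L; set b := sigma_min L.
have step1 : b - s <= a.
  apply: mars_lb ne1 _ => z hz.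
  have [x hx x0] := eigen_colvec hz.
  have [w hw hray] := rayleigh L N0.
  have hb : b <= Num.sqrt (complex.Re w) by apply: smin_ge.
  have vx := vnorm_gt0 x0.
  have h1 : complex.Re w * vnorm x ^+ 2 <= (Normc.normc z * vnorm x) ^+ 2.
    by rewrite -vnormZ -hx hray.
  rewrite exprMn ler_pM2r ?exprn_gt0 // in h1.
  have h2 : Num.sqrt (complex.Re w) <= Normc.normc z.
    by rewrite -(ger0_norm (nc_ge0 z)) -sqrtr_sqr ler_sqrt ?sqr_ge0.
  have h3 := nc_le_ReIm z.
  have h4 := im_bound x0 hx hK.
  lra.
have step2 : forall U, (exists (W D : 'M[R[i]]_(n * (m + m))),
     [/\ Defs.unitary W, Defs.diagonal D, Defs.strictly_upper U &
       L = W *m (D + U) *m adj W]) -> a - b <= opnorm U.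
  move=> U [W [D [Wu hD hU hLe]]].
  suff : a - opnorm U <= b by lra.
  apply: smin_lb ne2 _ => w hw.
  have [x hxw x0] := eig_LL hw.
  have vx := vnorm_gt0 x0.
  have [k hk] := diag_bound N0 hD.
  have hT : forall i j : 'I_(n * (m + m)), (j < i)%N -> (D + U) i j = 0.
    move=> i j ji.
    have ij : i != j by apply/eqP => h; rewrite h ltnn in ji.
    by rewrite mxE (hU i j (ltnW ji)) (hD i j ij) addr0.
  have hkk : (D + U) k k = D k k by rewrite mxE (hU k k (leqnn _)) addr0.
  have hek : eigenvalue L (D k k).
    by rewrite -hkk; apply: (trig_eigen _ Wu hT hLe).
  have ha : a <= Normc.normc (D k k).
    by apply: le_trans (Re_le_nc _); apply: mars_ge.
  set y := adj W *m x.
  have hWW : W *m adj W = 1%:M by apply/unitarymxP.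
  have vy : vnorm y = vnorm x by apply: vnorm_iso; rewrite /adj trmxCK.
  have vLx : vnorm (L *m x) = vnorm ((D + U) *m y).
    by rewrite hLe /y -!mulmxA vnorm_iso // unitary_tC.
  have hDy : vnorm (D *m y) <= vnorm ((D + U) *m y) + vnorm (U *m y).
    have -> : D *m y = (D + U) *m y + (-1) *: (U *m y).
      by rewrite mulmxDl scaleN1r addrK.
    by apply: le_trans (vnormD _ _) _; rewrite vnormZ nc_N1 mul1r.
  have hUy := opnormP U y.
  have hkk' := hk y.
  have Rw0 : 0 <= complex.Re w.
    have : 0 <= complex.Re w * vnorm x ^+ 2 by rewrite -hxw sqr_ge0.
    by rewrite pmulr_lge0 // exprn_gt0.
  have hsq : vnorm (L *m x) = Num.sqrt (complex.Re w) * vnorm x.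
    apply: sq_inj; rewrite ?vnorm_ge0 ?mulr_ge0 ?sqrtr_ge0 ?vnorm_ge0 //.
    by rewrite hxw exprMn (sqr_sqrtr Rw0).
  rewrite vy in hUy hkk'.
  have h5 : Normc.normc (D k k) * vnorm x <= (Num.sqrt (complex.Re w) + opnorm U) * vnorm x.
    rewrite mulrDl -hsq vLx; apply: le_trans hkk' _; apply: le_trans hDy _.
    by rewrite lerD2l.
  rewrite ler_pM2r // in h5.
  by rewrite lerBlDr; apply: le_trans ha h5.
have hD0 : 0 <= dev_normality L.
  by apply: dev_lb N0 _ => U _; exact: opnorm_ge0.
have step3 : a - b <= dev_normality L by apply: dev_lb N0 _.
rewrite ler_norml; apply/andP; split; lra.
Qed.
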